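(* Let $n,k$ be positive integers and $X$ a nonempty subset of $[n]$. Let $Q\colon\mathbb{F}_2^{\binom{[n]}{\leq 2}}\to\mathbb{Z}_{2^k}$ be a $k$-integer polynomial of degree $d\geq 1$, written as $Q(x)=\alpha+\sum_{F\in\binom{\binom{[n]}{\leq 2}}{\leq d}}\lambda_F\prod_{e\in F}x(e)\bmod 2^k$, and let $\boldsymbol\lambda=\langle\lambda_F\rangle$ be its coefficients in this representation. Let $V$ be a block HJ-subspace of $\mathbb{F}_2^{\binom{[n]}{\leq 2}}$ of dimension $m$ with wildcard sets $(I_1,\dots,I_m)$ and associated embedding $e_V\colon\mathbb{F}_2^{\binom{[m]}{\leq 2}}\to V$. Assume (i) $\boldsymbol\lambda$ is canonical in $X$, and (ii) for every $i\in[m]$, $I_i\subseteq X$ and $|I_i|=(d+1)!\,2^k$. Then $\deg(Q\circ e_V)<\deg(Q)$.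
   Context: $\binom{S}{\leq j}$ denotes the set of nonempty subsets of $S$ with at most $j$ elements; $\mathbb{Z}_{2^k}=\mathbb{Z}/2^k\mathbb{Z}$. Integer polynomial: $Q\colon\mathbb{F}_2^{\binom{[n]}{\leq 2}}\to\mathbb{Z}_{2^k}$ is a $k$-integer polynomial of degree at most $d$ if $Q(x)=\alpha+\sum_{F}\lambda_F\prod_{e\in F}x(e)\bmod 2^k$, summing over $F\in\binom{\binom{[n]}{\leq 2}}{\leq d}$, with $\alpha,\lambda_F\in\mathbb{Z}_{2^k}$, $x(e)\in\{0,1\}\subseteq\mathbb{Z}_{2^k}$; its degree is the least such $d$. HJ-subspaces: let $n\geq m\geq 1$ and $\boldsymbol{I}=(I_1,\dots,I_m)$ pairwise disjoint nonempty subsets of $[n]$ with $\min I_1<\dots<\min I_m$. For $q\in\binom{[m]}{\leq 2}$ let $b_q$ be the indicator of $\{p\in\binom{[n]}{\leq 2}: p\subseteq\bigcup_{i\in q}I_i,\ p\cap I_i\neq\emptyset\ \forall i\in q\}$, and $\mathrm{Id}_{\boldsymbol I}(x)=\sum_q x(q)b_q$. An HJ-embedding is $e=\mathrm{Id}_{\boldsymbol I}+c$ with $c\in\mathbb{F}_2^{\binom{[n]}{\leq 2}}$ vanishing on $\binom{I_1\cup\dots\cup I_m}{\leq 2}$; its image $V$ is an HJ-subspace of dimension $m$ with wildcard sets $\boldsymbol I$ and $e_V:=e$. $V$ is block if $\max I_i<\min I_{i+1}$ for all $i<m$. Type and canonical: for a nonempty set $F$ of nonempty subsets of $[n]$, writing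 $\bigcup F=\{u_1<\dots<u_\ell\}$, $\tau(F)=\{S\subseteq[\ell]:\{u_i:i\in S\}\in F\}$. The collection $\boldsymbol\lambda$ is canonical in $X$ if $\lambda_{F_1}=\lambda_{F_2}$ whenever $F_1,F_2\in\binom{\binom{X}{\leq 2}}{\leq d}$ and $\tau(F_1)=\tau(F_2)$. *)

(* Defs.v *)
From HB Require Import structures.
From mathcomp Require Import all_boot all_order all_algebra.
Set Implicit Arguments. Unset Strict Implicit. Unset Printing Implicit Defensive.
Import Order.TTheory GRing.Theory.
Local Open Scope ring_scope.

(* [n] is modelled by 'I_n (0-based, with its natural order). *)

Definition E (n : nat) := {S : {set 'I_n} | (0 < #|S| <= 2)%N}.
HB.instance Definition _ n := Finite.on (E n).

Definition intpoly_le (k : nat) (N : finType)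
    (Q : {ffun N -> bool} -> 'Z_(2 ^ k)) (d : nat) : Prop :=
  exists (alpha : 'Z_(2 ^ k)) (lam : {set N} -> 'Z_(2 ^ k)),
    forall x : {ffun N -> bool},
      Q x = alpha + \sum_(F : {set N} | (0 < #|F| <= d)%N)
                      lam F * \prod_(e in F) ((x e : nat)%:R).

Definition intpoly_deg (k : nat) (N : finType)
    (Q : {ffun N -> bool} -> 'Z_(2 ^ k)) (d : nat) : Prop :=
  intpoly_le Q d /\ forall d', intpoly_le Q d' -> (d <= d')%N.

Definition Ucup n (F : {set E n}) : {set 'I_n} := \bigcup_(e in F) val e.

Lemma rank_lt n (U : {set 'I_n}) (u : 'I_n) : (#|[set v in U | (v < u)%N]| < n)%N.
Proof.
apply: (leq_trans _ (eq_leq (card_ord n))); rewrite -cardsT.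
apply: proper_card; rewrite properT; apply/eqP => H.
have : u \in [set v in U | (v < u)%N] by rewrite H inE.
by rewrite inE ltnn andbF.
Qed.

Definition rk n (U : {set 'I_n}) (u : 'I_n) : 'I_n := Ordinal (rank_lt U u).

(* The type tau(F): writing U = \bigcup F = {u_0 < ... < u_(l-1)},
   tau(F) = { S subset of [l] : {u_i : i in S} \in F }
          = { rank-image of e : e \in F }. *)
Definition rkimg n (U : {set 'I_n}) (e : E n) : {set 'I_n} :=
  [set rk U u | u in val e].
Definition tau n (F : {set E n}) : {set {set 'I_n}} :=
  [set rkimg (Ucup F) e | e in F].

Definition canonical_in k n (d : nat) (X : {set 'I_n})
    (lam : {set E n} -> 'Z_(2 ^ k)) : Prop :=
  forall F1 F2 : {set E n},
    (forall e, e \in F1 -> val e \subset X) -> (0 < #|F1| <= d)%N ->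
    (forall e, e \in F2 -> val e \subset X) -> (0 < #|F2| <= d)%N ->
    tau F1 = tau F2 -> lam F1 = lam F2.

Definition wildcards n m (I : 'I_m -> {set 'I_n}) : Prop :=
  [/\ (forall i j : 'I_m, i != j -> [disjoint I i & I j]),
      (forall i, I i != set0) &
      (forall i j : 'I_m, (i < j)%N ->
         exists2 a, a \in I i & forall b, b \in I j -> (a < b)%N)].

Definition block n m (I : 'I_m -> {set 'I_n}) : Prop :=
  forall i j : 'I_m, nat_of_ord j = i.+1 ->
    forall a b, a \in I i -> b \in I j -> (a < b)%N.

Definition bq n m (I : 'I_m -> {set 'I_n}) (q : E m) (p : E n) : bool :=
  (val p \subset \bigcup_(i in val q) I i) &&
  [forall i in val q, ~~ [disjoint val p & I i]].

Definition IdI n m (I : 'I_m -> {set 'I_n}) (x : {ffun E m -> bool})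
  : {ffun E n -> bool} :=
  [ffun p => \big[addb/false]_(q : E m) (x q && bq I q p)].

Definition HJemb n m (I : 'I_m -> {set 'I_n}) (c : {ffun E n -> bool})
    (x : {ffun E m -> bool}) : {ffun E n -> bool} :=
  [ffun p => addb (IdI I x p) (c p)].

Definition c_admissible n m (I : 'I_m -> {set 'I_n}) (c : {ffun E n -> bool})
  : Prop :=
  forall p : E n, val p \subset \bigcup_(i : 'I_m) I i -> c p = false.

(* Main.v *)
Require Import Defs.
From HB Require Import structures.
From mathcomp Require Import all_boot all_order all_algebra zify.
From Stdlib Require Import Classical.
Set Implicit Arguments. Unset Strict Implicit. Unset Printing Implicit Defensive.
Import GRing.Theory.
Local Open Scope ring_scope.

Lemma prod_natb (R : comNzRingType) (T : finType) (A : {pred T}) (b : T -> bool) :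
  \prod_(e in A) ((b e : nat)%:R : R) = ([forall e in A, b e] : nat)%:R.
Proof.
case: (boolP [forall e in A, b e]) => H.
  by apply: big1 => e eA; move/forall_inP: H => /(_ e eA) ->.
move: H; rewrite negb_forall_in => /exists_inP [e eA be].
by rewrite (bigD1 e) //= (negbTE be) mul0r.
Qed.

Lemma sorted_enum_ord n (A : {set 'I_n}) : sorted ltn (map val (enum A)).
Proof.
  rewrite -[enum _](eq_filter (mem_enum _)).
  rewrite -(eq_filter (mem_map val_inj _)) -filter_map.
  by rewrite (sorted_filter ltn_trans) // unlock val_ord_enum iota_ltn_sorted.
Qed.

Lemma idx_count n (s : seq 'I_n) u : sorted ltn (map val s) -> u \in s ->
  index u s = count (fun v : 'I_n => (v < u)%N) s.
Proof.
elim: s => [|x s IH] //= Hs.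
have Hs' : sorted ltn (map val s) by move: Hs; case: (map val s) => //= y t /andP[].
have Hall : all (fun v : 'I_n => (x < v)%N) s.
  move: Hs; rewrite path_sortedE; last exact: ltn_trans.
  by case/andP; rewrite all_map.
rewrite inE; case: eqP => [->|/eqP ne] /= Hu.
  rewrite eqxx ltnn add0n; apply/esym/eqP; rewrite -leqn0 leqNgt -has_count.
  by apply/hasPn => v vs; rewrite -leqNgt ltnW // (allP Hall v vs).
have := allP Hall u Hu => xu.
by rewrite eq_sym (negbTE ne) xu IH.
Qed.

Lemma card_cond_count (T : finType) (S : {set T}) (P : pred T) :
  #|[set v in S | P v]| = count P (enum S).
Proof.
rewrite -sum1_card -sum1_count.
by rewrite big_enum_cond /=; apply: eq_bigl => v; rewrite !inE.
Qed.

Lemma rk_index n (S : {set 'I_n}) u : u \in S -> (rk S u : nat) = index u (enum S).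
Proof.
move=> uS; rewrite /= card_cond_count idx_count //; first exact: sorted_enum_ord.
by rewrite mem_enum.
Qed.

Lemma rk_inj n (S : {set 'I_n}) : {in S &, injective (rk S)}.
Proof.
move=> u v uS vS /(congr1 (@nat_of_ord n)).
rewrite !rk_index // => H.
by rewrite -(nth_index u (_ : u \in enum S)) ?mem_enum // H nth_index ?mem_enum.
Qed.

Lemma block_lt n m (I : 'I_m -> {set 'I_n}) : wildcards I -> block I ->
  forall (i j : 'I_m), (i < j)%N -> forall a b, a \in I i -> b \in I j -> (a < b)%N.
Proof.
case=> _ ne _ bl i j ij.
have [d Hd] : exists d, nat_of_ord j = (i + d.+1)%N.
  by exists (j - i.+1)%N; rewrite addnS -addSn subnKC.
clear ij; elim: d j Hd => [|d IH] j Hd a b ai bj.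
  by apply: (bl i j _ a b ai bj); rewrite Hd addn1.
have lt' : (i + d.+1 < m)%N by have := ltn_ord j; rewrite Hd; lia.
pose j' := Ordinal lt'.
have /set0Pn [c cI] := ne j'.
apply: (@ltn_trans c); first exact: (IH j').
by apply: (bl j' j _ c b cI bj); rewrite Hd /= addnS.
Qed.

Definition Un n m (I : 'I_m -> {set 'I_n}) : {set 'I_n} := \bigcup_(i : 'I_m) I i.
Definition qof n m (I : 'I_m -> {set 'I_n}) (p : E n) : {set 'I_m} :=
  [set i | ~~ [disjoint val p & I i]].
Definition qE n m (I : 'I_m -> {set 'I_n}) (g0 : E m) (p : E n) : E m :=
  insubd g0 (qof I p).

Lemma ndisjP (T : finType) (A B : {set T}) :
  reflect (exists2 u, u \in A & u \in B) (~~ [disjoint A & B]).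
Proof.
rewrite -setI_eq0; apply: (iffP (set0Pn _)) => [[u]|[u uA uB]].
  by rewrite inE => /andP [] ; exists u.
by exists u; rewrite inE uA.
Qed.

Lemma disj_eq n m (I : 'I_m -> {set 'I_n}) : wildcards I ->
  forall i j u, u \in I i -> u \in I j -> i = j.
Proof.
case=> dis _ _ i j u ui uj; apply/eqP; apply: contraT => ne.
by move: (dis i j ne) => /disjointFr /(_ ui); rewrite uj.
Qed.

Lemma in_Un n m (I : 'I_m -> {set 'I_n}) u : u \in Un I -> exists i, u \in I i.
Proof. by case/bigcupP => i _ ui; exists i. Qed.

Lemma in_qof n m (I : 'I_m -> {set 'I_n}) (p : E n) i :
  (i \in qof I p) = ~~ [disjoint val p & I i].
Proof. by rewrite inE. Qed.

Lemma qof_card n m (I : 'I_m -> {set 'I_n}) (p : E n) : wildcards I ->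
  val p \subset Un I -> (0 < #|qof I p| <= 2)%N.
Proof.
move=> W pU; have := valP p => /andP [p0 p2]; apply/andP; split.
  have /card_gt0P [u up] := p0; have [i ui] := in_Un (subsetP pU u up).
  by apply/card_gt0P; exists i; rewrite in_qof; apply/ndisjP; exists u.
apply: leq_trans p2.
pose g (u : 'I_n) := [pick i | u \in I i].
apply: leq_trans (leq_imset_card g (val p)).
rewrite -(card_imset _ (@Some_inj _)); apply: subset_leq_card.
apply/subsetP => _ /imsetP [i iq ->].
move: iq; rewrite in_qof => /ndisjP [u up ui].
apply/imsetP; exists u => //; rewrite /g.
case: pickP => [i' ui'|/(_ i)]; last by rewrite ui.
by rewrite (disj_eq W ui ui').
Qed.

Lemma qE_val n m (I : 'I_m -> {set 'I_n}) (g0 : E m) (p : E n) : wildcards I ->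
  val p \subset Un I -> val (qE I g0 p) = qof I p.
Proof. by move=> W pU; rewrite /qE insubdK //; apply: qof_card. Qed.

Lemma bq_eq n m (I : 'I_m -> {set 'I_n}) (g0 : E m) (p : E n) (q : E m) :
  wildcards I -> val p \subset Un I -> bq I q p = (q == qE I g0 p).
Proof.
move=> W pU; rewrite -val_eqE qE_val //; apply/idP/eqP.
  case/andP => sub /forall_inP all; apply/setP => i; rewrite in_qof.
  apply/idP/idP; first by move/all.
  case/ndisjP => u up ui; case/bigcupP: (subsetP sub u up) => j jq uj.
  by rewrite (disj_eq W ui uj).
move=> eq; rewrite /bq eq; apply/andP; split.
  apply/subsetP => u up; have [i ui] := in_Un (subsetP pU u up).
  by apply/bigcupP; exists i => //; rewrite in_qof; apply/ndisjP; exists u.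
by apply/forall_inP => i; rewrite in_qof.
Qed.

Lemma IdI_in n m (I : 'I_m -> {set 'I_n}) (g0 : E m) (p : E n) x :
  wildcards I -> val p \subset Un I -> IdI I x p = x (qE I g0 p).
Proof.
move=> W pU; rewrite /IdI ffunE (bigD1 (qE I g0 p)) //= (bq_eq g0 _ W pU) eqxx andbT.
rewrite big1 ?addbF // => q ne; by rewrite (bq_eq g0 _ W pU) (negbTE ne) andbF.
Qed.

Lemma IdI_out n m (I : 'I_m -> {set 'I_n}) (p : E n) x :
  ~~ (val p \subset Un I) -> IdI I x p = false.
Proof.
move=> npU; rewrite /IdI ffunE big1 // => q _; apply/negbTE.
rewrite negb_and; apply/orP; right.
rewrite /bq negb_and; apply/orP; left; apply: contra npU => sub.
apply: (subset_trans sub); apply/bigcupsP => i _; exact: (bigcup_sup i).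
Qed.

Lemma HJ_val n m (I : 'I_m -> {set 'I_n}) (g0 : E m) c x (p : E n) :
  wildcards I -> c_admissible I c ->
  HJemb I c x p = if val p \subset Un I then x (qE I g0 p) else c p.
Proof.
move=> W adm; rewrite /HJemb ffunE; case: ifP => pU.
  by rewrite (IdI_in g0 _ W pU) adm ?addbF.
by rewrite IdI_out ?pU.
Qed.

Local Close Scope ring_scope.

Lemma imset_inj_on (T T' : finType) (f : T -> T') (D A B : {set T}) :
  {in D &, injective f} -> A \subset D -> B \subset D -> f @: A = f @: B -> A = B.
Proof.
move=> inj AD BD eq.
have H (X Y : {set T}) : X \subset D -> Y \subset D -> f @: X = f @: Y -> X \subset Y.
  move=> XD YD eXY; apply/subsetP => x xX.
  have : f x \in f @: Y by rewrite -eXY imset_f.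
  case/imsetP => y yY fxy.
  by rewrite (inj x y (subsetP XD x xX) (subsetP YD y yY) fxy).
by apply/eqP; rewrite eqEsubset (H A B) ?(H B A).
Qed.

Lemma cnt_U n (A B : {set 'I_n}) (u : 'I_n) : [disjoint A & B] ->
  #|[set v in A :|: B | (v < u)%N]| = (#|[set v in A | (v < u)%N]| + #|[set v in B | (v < u)%N]|)%N.
Proof.
move=> dis.
have -> : [set v in A :|: B | (v < u)%N] = [set v in A | (v < u)%N] :|: [set v in B | (v < u)%N].
  by apply/setP => v; rewrite !inE andb_orl.
rewrite cardsU (_ : _ :&: _ = set0) ?cards0 ?subn0 //.
apply/setP => v; rewrite !inE; apply/negP => /andP [/andP [vA _] /andP [vB _]].
by move: (disjointFr dis vA); rewrite vB.
Qed.

Lemma side n m (I : 'I_m -> {set 'I_n}) : wildcards I -> block I ->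
  forall i j v u, v \in I i -> u \in I j -> i != j -> (v < u)%N = (i < j)%N.
Proof.
move=> W B i j v u vi uj ne.
case: (ltngtP i j) => h.
- exact: (block_lt W B h vi uj).
- by apply/negbTE; rewrite -leqNgt ltnW // (block_lt W B h uj vi).
- by move: ne; rewrite (val_inj h) eqxx.
Qed.

Lemma cnt_side n m (I : 'I_m -> {set 'I_n}) : wildcards I -> block I ->
  forall i j (S : {set 'I_n}) u, S \subset I i -> u \in I j -> i != j ->
  #|[set v in S | (v < u)%N]| = if (i < j)%N then #|S| else 0%N.
Proof.
move=> W B i j S u SI uj ne.
have -> : [set v in S | (v < u)%N] = if (i < j)%N then S else set0.
  apply/setP => v; rewrite !inE; case: (boolP (v \in S)) => vS /=.
    by rewrite (side W B (subsetP SI v vS) uj ne); case: ifP; rewrite ?inE.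
  by case: ifP; rewrite ?inE // (negbTE vS).
by case: ifP; rewrite ?cards0.
Qed.

Lemma transport n m (I : 'I_m -> {set 'I_n}) (g0 : E m) (i0 : 'I_m)
    (F0 : {set E n}) (S : {set 'I_n}) :
  wildcards I -> block I ->
  (forall e, e \in F0 -> val e \subset Un I) ->
  S \subset I i0 -> #|S| = #|Ucup F0 :&: I i0| ->
  exists F : {set E n}, [/\ Ucup F :&: I i0 = S, Ucup F :\: I i0 = Ucup F0 :\: I i0,
     tau F = tau F0, #|F| = #|F0| &
     (forall e, e \in F -> val e \subset Un I) /\ qE I g0 @: F = qE I g0 @: F0].
Proof.
move=> W B inF0 SI cS.
set U0 := Ucup F0; set S0 := U0 :&: I i0; set R := U0 :\: I i0.
pose sg u := if u \in S0 then nth u (enum S) (index u (enum S0)) else u.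
have cS' : size (enum S) = size (enum S0) by rewrite -!cardE.
have sg_S u : u \in S0 -> sg u \in S.
  by move=> uS; rewrite /sg uS -mem_enum mem_nth // cS' index_mem mem_enum.
have sg_idx u : u \in S0 -> index (sg u) (enum S) = index u (enum S0).
  by move=> uS; rewrite /sg uS index_uniq ?enum_uniq // cS' index_mem mem_enum.
have sg_R u : u \notin S0 -> sg u = u by rewrite /sg => /negbTE ->.
have S0I : S0 \subset I i0 by apply: subsetIr.
have S0U : S0 \subset U0 by apply: subsetIl.
have eU0 e : e \in F0 -> val e \subset U0 by move=> eF; apply: (bigcup_sup e eF).
have U0Un : U0 \subset Un I by apply/bigcupsP => e eF; exact: inF0.
have nS0 v : v \in U0 -> v \notin S0 -> v \notin I i0.
  by move=> vU; apply: contra => vI; rewrite !inE vU vI.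
have Si0 u : u \in S -> u \in I i0 by apply: (subsetP SI).
have sg_inj : {in U0 &, injective sg}.
  move=> u v uU vU; case: (boolP (u \in S0)) => uS; case: (boolP (v \in S0)) => vS.
  - move=> e; have := sg_idx u uS; rewrite e sg_idx // => h.
    rewrite -(nth_index u (_ : u \in enum S0)) ?mem_enum // -h.
    by rewrite nth_index ?mem_enum.
  - rewrite (sg_R v vS) => e; have := Si0 _ (sg_S u uS); rewrite e => vI.
    by move: (nS0 v vU vS); rewrite vI.
  - rewrite (sg_R u uS) => e; have := Si0 _ (sg_S v vS); rewrite -e => uI.
    by move: (nS0 u uU uS); rewrite uI.
  - by rewrite (sg_R u uS) (sg_R v vS).
have sgS0 : sg @: S0 = S.
  apply/eqP; rewrite eqEcard; apply/andP; split.
    by apply/subsetP => _ /imsetP [u uS ->]; exact: sg_S.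
  rewrite card_in_imset ?cS // => u v uS vS; apply: sg_inj; exact: (subsetP S0U).
have RnI u : u \in R -> u \notin I i0 by rewrite inE => /andP[].
have RU u : u \in R -> u \in U0 by rewrite inE => /andP[].
have sgR : sg @: R = R.
  rewrite -[in RHS](imset_id R); apply: eq_in_imset => u uR; apply: sg_R.
  by apply: contra (RnI u uR); apply: (subsetP S0I).
have U0eq : U0 = S0 :|: R by rewrite setID.
have sgU0 : sg @: U0 = R :|: S by rewrite {1}U0eq imsetU sgS0 sgR setUC.
have sg_blk u i : u \in U0 -> (sg u \in I i) = (u \in I i).
  move=> uU; case: (boolP (u \in S0)) => uS; last by rewrite sg_R.
  have ui0 : u \in I i0 := subsetP S0I u uS.
  have si0 : sg u \in I i0 := Si0 _ (sg_S u uS).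
  apply/idP/idP => h.
    by have := disj_eq W si0 h => <-.
  by have := disj_eq W ui0 h => <-.
have sg_Un u : u \in U0 -> sg u \in Un I.
  move=> uU; case: (boolP (u \in S0)) => uS; last by rewrite sg_R // (subsetP U0Un).
  by apply/bigcupP; exists i0 => //; apply: Si0; apply: sg_S.
have disRS : [disjoint R & S].
  rewrite -setI_eq0; apply/eqP/setP => u; rewrite !inE.
  by case: (boolP (u \in S)) => uS; rewrite ?andbF ?andbT // (Si0 u uS).
have disS0R : [disjoint S0 & R].
  rewrite -setI_eq0; apply/eqP/setP => u; rewrite !inE.
  by case: (u \in I i0); rewrite ?andbF.
have rank u : u \in U0 -> rk (R :|: S) (sg u) = rk U0 u.
  move=> uU; apply: val_inj => /=.
  rewrite (cnt_U _ disRS) [in RHS]U0eq (cnt_U _ disS0R) addnC.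
  case: (boolP (u \in S0)) => uS.
    have := rk_index (sg_S u uS); rewrite /= => ->.
    have := rk_index uS; rewrite /= => ->.
    rewrite sg_idx //; congr addn.
    apply: eq_card => v; case: (boolP (v \in R)) => vR; last first.
      by move: vR; rewrite !inE => /negbTE ->.
    move: (vR); rewrite !inE => -> /=.
    have [j vj] := in_Un (subsetP U0Un v (RU v vR)).
    have ne : j != i0 by apply: contraNneq (RnI v vR) => <-.
    rewrite (side W B vj (Si0 _ (sg_S u uS)) ne).
    by rewrite (side W B vj (subsetP S0I u uS) ne).
  rewrite (sg_R u uS); congr addn.
  have [j uj] := in_Un (subsetP U0Un u uU).
  have ne : i0 != j by apply: contraNneq (nS0 u uU uS) => ->.
  by rewrite (cnt_side W B SI uj ne) (cnt_side W B S0I uj ne) cS.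
pose tE (e : E n) : E n := insubd e (sg @: val e).
have tE_val e : e \in F0 -> val (tE e) = sg @: val e.
  move=> eF; rewrite /tE insubdK //; change (0 < #|sg @: val e| <= 2)%N; rewrite card_in_imset; first exact: (valP e).
  by move=> x y xe ye; apply: sg_inj; apply: (subsetP (eU0 e eF)).
have tE_Un e : e \in F0 -> val (tE e) \subset Un I.
  move=> eF; rewrite tE_val //; apply/subsetP => _ /imsetP [u ue ->].
  by apply: sg_Un; apply: (subsetP (eU0 e eF)).
exists (tE @: F0).
have UF : Ucup (tE @: F0) = R :|: S.
  rewrite -sgU0; apply/setP => u; rewrite /Ucup; apply/bigcupP/imsetP.
    case => _ /imsetP [e eF ->]; rewrite tE_val // => /imsetP [v ve ->].
    by exists v => //; apply/bigcupP; exists e.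
  case => v /bigcupP [e eF ve] ->; exists (tE e); first exact: imset_f.
  by rewrite tE_val //; apply: imset_f.
split.
- rewrite UF; apply/setP => u; rewrite !inE; have := Si0 u.
  by case: (u \in S); case: (u \in I i0); rewrite ?andbF ?andbT ?orbT //= => /(_ isT).
- rewrite UF; apply/setP => u; rewrite !inE; have := Si0 u.
  by case: (u \in S); case: (u \in I i0); rewrite ?andbF ?andbT ?orbT ?orbF //= => /(_ isT).
- rewrite /tau UF -imset_comp; apply: eq_in_imset => e eF /=.
  rewrite /rkimg tE_val // -imset_comp; apply: eq_in_imset => u ue /=.
  by apply: rank; apply: (subsetP (eU0 e eF)).
- rewrite card_in_imset // => e1 e2 e1F e2F /(congr1 val); rewrite !tE_val // => h.
  by apply: val_inj; apply: (imset_inj_on sg_inj (eU0 e1 e1F) (eU0 e2 e2F) h).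
split.
  by move=> _ /imsetP [e eF ->]; apply: tE_Un.
rewrite -imset_comp; apply: eq_in_imset => e eF /=; apply: val_inj.
rewrite !qE_val ?tE_Un ?inF0 //; apply/setP => i; rewrite !in_qof tE_val //.
have eU := subsetP (eU0 e eF).
apply/ndisjP/ndisjP.
  by case=> _ /imsetP [v ve ->] svi; exists v => //; rewrite -sg_blk ?eU.
by case=> v ve vi; exists (sg v); [apply: imset_f | rewrite sg_blk ?eU].
Qed.

Lemma tau_inj n (F1 F2 : {set E n}) : Ucup F1 = Ucup F2 -> tau F1 = tau F2 -> F1 = F2.
Proof.
move=> eU eT.
have H (A B : {set E n}) : Ucup A = Ucup B -> tau A = tau B -> A \subset B.
  move=> eU' eT'; apply/subsetP => e eA.
  have : rkimg (Ucup A) e \in tau B by rewrite -eT' /tau imset_f.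
  case/imsetP => e' e'B; rewrite -eU' => h.
  have sA : val e \subset Ucup A by apply: (bigcup_sup e eA).
  have sB : val e' \subset Ucup A by rewrite eU'; apply: (bigcup_sup e' e'B).
  by rewrite (val_inj (imset_inj_on (@rk_inj n (Ucup A)) sA sB h)).
by apply/eqP; rewrite eqEsubset (H F1 F2) // (H F2 F1).
Qed.

Lemma bin_div k d a : (0 < a <= d.+1)%N -> 2 ^ k %| 'C((d.+1)`! * 2 ^ k, a).
Proof.
case: a => [|a] // /andP [_ ad].
have /dvdnP [q hq] : a.+1 %| (d.+1)`! by apply: dvdn_fact; rewrite ad.
have := mul_bin_diag ((d.+1)`! * 2 ^ k) a.
set N := ((d.+1)`! * 2 ^ k)%N; set C := 'C(N, a.+1); set C' := 'C(N.-1, a) => h.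
have : (a.+1 * C = a.+1 * (q * 2 ^ k * C'))%N.
  rewrite -h /N hq; set t := (2 ^ k)%N; nia.
move/eqP; rewrite eqn_pmul2l // => /eqP ->.
by rewrite dvdn_mulr // dvdn_mull.
Qed.

Lemma Zp_zero k (t : nat) : (0 < k)%N -> 2 ^ k %| t -> ((t%:R : 'Z_(2 ^ k)) = 0)%R.
Proof.
move=> k0 /dvdnP [q ->]; rewrite natrM pchar_Zp ?GRing.mulr0 //.
by rewrite -{1}(expn0 2) ltn_exp2l.
Qed.

Lemma card_bigcup_le (T J : finType) (P : pred J) (f : J -> {set T}) :
  (#|\bigcup_(j | P j) f j| <= \sum_(j | P j) #|f j|)%N.
Proof.
apply: (big_rec2 (fun (A : {set T}) s => #|A| <= s)%N); first by rewrite cards0.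
move=> j A s _ h; rewrite cardsU; apply: leq_trans (leq_subr _ _) _.
by rewrite leq_add2l.
Qed.

Lemma a_bound n m (I : 'I_m -> {set 'I_n}) (g0 : E m) (i0 : 'I_m) (F0 : {set E n}) :
  wildcards I -> (forall e, e \in F0 -> val e \subset Un I) ->
  {in F0 &, injective (qE I g0)} -> (#|Ucup F0 :&: I i0| <= #|F0|.+1)%N.
Proof.
move=> W ins inj.
have -> : Ucup F0 :&: I i0 = \bigcup_(e in F0) (val e :&: I i0).
  apply/setP => u; rewrite inE; apply/andP/bigcupP.
    by case=> /bigcupP [e eF ue] ui; exists e => //; rewrite inE ue.
  case=> e eF; rewrite inE => /andP [ue ui]; split => //.
  by apply/bigcupP; exists e.
apply: leq_trans (card_bigcup_le _ _) _.
pose b (e : E n) := qof I e == [set i0].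
apply: (@leq_trans (\sum_(e in F0) (1 + b e))%N).
  apply: leq_sum => e eF; rewrite /b; case: eqP => h /=.
    apply: leq_trans (subset_leq_card (subsetIl _ _)) _.
    by case/andP: (valP e).
  rewrite leqNgt; apply/negP => h2; apply: h.
  have eS : val e :&: I i0 = val e.
    apply/eqP; rewrite eqEcard subsetIl /=; apply: leq_trans h2.
    by case/andP: (valP e).
  apply/setP => i; rewrite in_qof inE; apply/ndisjP/eqP.
    case=> u ue ui; have : u \in val e :&: I i0 by rewrite eS.
    by rewrite inE => /andP [_ ui0]; rewrite (disj_eq W ui ui0).
  move=> ->; case/andP: (valP e) => /card_gt0P [u ue] _; exists u => //.
  have : u \in val e :&: I i0 by rewrite eS.
  by rewrite inE => /andP [].
rewrite big_split /= sum1_card -addn1 leq_add2l.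
have -> : (\sum_(e in F0) b e)%N = #|[set e in F0 | b e]|.
  rewrite -sum1_card big_mkcond [RHS]big_mkcond /=; apply: eq_bigr => e _.
  by rewrite !inE; case: (e \in F0); case: (b e).
apply/card_le1_eqP => e1 e2; rewrite !inE /b => /andP [e1F /eqP q1] /andP [e2F /eqP q2].
by apply: inj => //; apply: val_inj; rewrite !qE_val ?ins // q1 q2.
Qed.


Local Open Scope ring_scope.

Definition hF n m (I : 'I_m -> {set 'I_n}) (g0 : E m) (F : {set E n}) : {set E m} :=
  qE I g0 @: [set e in F | val e \subset Un I].
Definition cst n m (I : 'I_m -> {set 'I_n}) (c : {ffun E n -> bool}) (F : {set E n}) : bool :=
  [forall e in F, (val e \subset Un I) || c e].

Lemma coef_zero n m k d (I : 'I_m -> {set 'I_n}) (g0 : E m) (c : {ffun E n -> bool})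
    (X : {set 'I_n}) (lam : {set E n} -> 'Z_(2 ^ k)) (G : {set E m}) :
  (0 < k)%N -> (1 <= d)%N -> wildcards I -> block I -> canonical_in d X lam ->
  (forall i, I i \subset X /\ #|I i| = ((d.+1)`! * 2 ^ k)%N) ->
  (d <= #|G|)%N ->
  \sum_(F : {set E n} | (0 < #|F| <= d)%N && (hF I g0 F == G))
     lam F * ((cst I c F : nat)%:R) = 0.
Proof.
move=> k0 d1 W B can IX dG.
set A := fun F : {set E n} => (0 < #|F| <= d)%N && (hF I g0 F == G).
have props F : A F -> [/\ forall e, e \in F -> val e \subset Un I, #|F| = d,
    {in F &, injective (qE I g0)} & qE I g0 @: F = G].
  case/andP => /andP [F0 Fd] /eqP hG.
  set Fin := [set e in F | val e \subset Un I].
  have c1 : (#|G| <= #|Fin|)%N by rewrite -hG /hF leq_imset_card.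
  have sF : Fin \subset F by apply/subsetP => e; rewrite inE => /andP [].
  have c2 := subset_leq_card sF.
  have eqF : Fin = F.
    apply/eqP; rewrite eqEcard sF /=; apply: leq_trans Fd _; exact: leq_trans dG c1.
  have hG' : qE I g0 @: F = G by rewrite -eqF.
  split => //.
  - by move=> e; rewrite -eqF inE => /andP [].
  - by apply/eqP; rewrite eqn_leq Fd; apply: leq_trans dG (leq_trans c1 c2).
  - have c3 : (#|G| <= #|F|)%N by rewrite -hG' leq_imset_card.
    by apply/imset_injP; rewrite hG' eqn_leq (leq_trans Fd dG) c3.
rewrite (eq_bigr (fun F => lam F)); last first.
  move=> F AF; have [ins _ _ _] := props F AF.
  have -> : cst I c F by apply/forall_inP => e eF; rewrite ins.
  by rewrite mulr1.
have /card_gt0P [gs gsG] : (0 < #|G|)%N by lia.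
have /card_gt0P [i0 i0g] : (0 < #|val gs|)%N by case/andP: (valP gs).
have UnX : Un I \subset X by apply/bigcupsP => i _; case: (IX i).
pose key (F : {set E n}) := (tau F, Ucup F :\: I i0, (inord #|Ucup F :&: I i0| : 'I_n.+1)).
rewrite (partition_big key predT) //=; apply: big1 => K _.
case: (pickP (fun F => A F && (key F == K))) => [F0 /andP [AF0 /eqP kF0] | none];
  last by rewrite big_pred0.
have [ins0 c0 inj0 im0] := props F0 AF0.
have AF0' := AF0; case/andP: AF0' => bF0 _.
rewrite (eq_bigr (fun _ => lam F0)); last first.
  move=> F /andP [AF /eqP kF]; have [ins _ _ _] := props F AF.
  case/andP: AF => bF _.
  apply: can => //.
  - by move=> e eF; apply: subset_trans (ins e eF) UnX.
  - by move=> e eF; apply: subset_trans (ins0 e eF) UnX.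
  - by have := congr1 (fun K => K.1.1) (etrans kF (esym kF0)).
set cls := [set F | A F && (key F == K)].
rewrite (eq_bigl (fun F => F \in cls)); last by move=> F; rewrite inE.
rewrite sumr_const.
set a := #|Ucup F0 :&: I i0|.
have inordE (x y : nat) : (x <= n)%N -> (y <= n)%N -> (inord x : 'I_n.+1) = inord y -> x = y.
  by move=> xn yn /(congr1 val); rewrite /= !inordK.
have cardn (Z : {set 'I_n}) : (#|Z| <= n)%N by rewrite -[X in (_ <= X)%N]card_ord max_card.
pose psi (F : {set E n}) := Ucup F :&: I i0.
have ccls : #|cls| = 'C(#|I i0|, a).
  rewrite -cards_draws -(@card_in_imset _ _ psi).
    apply: eq_card => S; rewrite [in RHS]inE; apply/imsetP/andP.
      case=> F; rewrite inE => /andP [AF /eqP kF] ->; split; first exact: subsetIr.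
      apply/eqP; apply: inordE; rewrite ?cardn //.
      by have := congr1 (fun K => K.2) (etrans kF (esym kF0)).
    case=> SI /eqP cS.
    have [F [h1 h2 h3 h4 [h5 h6]]] := transport g0 W B ins0 SI cS.
    exists F => //; rewrite inE; apply/andP; split.
      rewrite /A h4 bF0 /=.
      rewrite /hF.
      have -> : [set e in F | val e \subset Un I] = F.
        by apply/setP => e; rewrite inE; case: (boolP (e \in F)) => // eF; rewrite h5.
      by rewrite h6 im0.
    by rewrite -kF0 /key h1 h2 h3 cS.
  move=> F1 F2; rewrite !inE => /andP [AF1 /eqP k1] /andP [AF2 /eqP k2] hp.
  apply: tau_inj.
    rewrite -(setID (Ucup F1) (I i0)) -(setID (Ucup F2) (I i0)).
    congr (_ :|: _); first exact: hp.
    by have := congr1 (fun K => K.1.2) (etrans k1 (esym k2)).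
  by have := congr1 (fun K => K.1.1) (etrans k1 (esym k2)).
rewrite ccls -mulr_natr; case: (IX i0) => _ ->; rewrite Zp_zero ?mulr0 //.
apply: bin_div; apply/andP; split.
  have : gs \in qE I g0 @: F0 by rewrite im0.
  case/imsetP => e eF ge; move: i0g; rewrite ge qE_val ?ins0 // in_qof.
  case/ndisjP => u ue ui; apply/card_gt0P; exists u; rewrite inE ui andbT.
  by apply/bigcupP; exists e.
by rewrite -c0; apply: (@a_bound n m I g0 i0 F0 W ins0 inj0).
Qed.

Lemma prod_HJ n m k (I : 'I_m -> {set 'I_n}) (g0 : E m) (c : {ffun E n -> bool})
    (x : {ffun E m -> bool}) (F : {set E n}) :
  wildcards I -> c_admissible I c ->
  \prod_(e in F) ((HJemb I c x e : nat)%:R : 'Z_(2 ^ k)) =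
  (cst I c F : nat)%:R * \prod_(g in hF I g0 F) ((x g : nat)%:R).
Proof.
move=> W adm; rewrite !prod_natb -natrM mulnb /cst; congr ((nat_of_bool _)%:R).
apply/forall_inP/andP.
  move=> H; split.
    apply/forall_inP => e eF; have := H e eF; rewrite (HJ_val g0 _ _ W adm).
    by case: ifP.
  apply/forall_inP => g /imsetP [e]; rewrite inE => /andP [eF eU] ->.
  by have := H e eF; rewrite (HJ_val g0 _ _ W adm) eU.
case=> /forall_inP cs /forall_inP xs e eF; rewrite (HJ_val g0 _ _ W adm).
case: ifP => eU; first by apply: xs; apply: imset_f; rewrite inE eF eU.
by have := cs e eF; rewrite eU.
Qed.

Lemma min_exists (P : nat -> Prop) b : P b ->
  exists d', P d' /\ (forall d'', P d'' -> (d' <= d'')%N) /\ (d' <= b)%N.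
Proof.
elim/ltn_ind: b => b IH Pb.
case: (classic (exists b', (b' < b)%N /\ P b')) => [[b' [lt Pb']] | none].
  have [d' [Pd [mn le]]] := IH b' lt Pb'.
  by exists d'; split => //; split => //; apply: leq_trans le (ltnW lt).
exists b; split => //; split => // d'' Pd''; rewrite leqNgt; apply/negP => lt.
by apply: none; exists d''.
Qed.

Unset Implicit Arguments.
Theorem lemma5p10 (n k : nat) (X : {set 'I_n}) (d : nat)
    (Q : {ffun E n -> bool} -> 'Z_(2 ^ k))
    (alpha : 'Z_(2 ^ k)) (lam : {set E n} -> 'Z_(2 ^ k))
    (m : nat) (I : 'I_m -> {set 'I_n}) (c : {ffun E n -> bool}) :
  (0 < n)%N -> (0 < k)%N -> X != set0 -> (1 <= d)%N ->
  (forall x, Q x = alpha + \sum_(F : {set E n} | (0 < #|F| <= d)%N)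
                             lam F * \prod_(e in F) ((x e : nat)%:R)) ->
  intpoly_deg Q d ->
  (1 <= m)%N -> wildcards I -> block I -> c_admissible I c ->
  canonical_in d X lam ->
  (forall i, I i \subset X /\ #|I i| = ((d.+1)`! * 2 ^ k)%N) ->
  exists d', intpoly_deg (fun x => Q (HJemb I c x)) d' /\ (d' < d)%N.
Proof.
move=> n0 k0 X0 d1 HQ Hdeg m1 W B adm can IX.
have g0 : E m by exists [set Ordinal m1]; rewrite cards1.
pose coef (G : {set E m}) := \sum_(F : {set E n} | (0 < #|F| <= d)%N && (hF I g0 F == G))
     lam F * ((cst I c F : nat)%:R).
have Hle : intpoly_le (fun x => Q (HJemb I c x)) d.-1.
  exists (alpha + coef set0), coef => x; rewrite HQ -addrA; congr (_ + _).
  rewrite (eq_bigr (fun F => (lam F * (cst I c F : nat)%:R) *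
             \prod_(g in hF I g0 F) ((x g : nat)%:R))); last first.
    by move=> F _; rewrite (@prod_HJ n m k I g0 c x F W adm) mulrA.
  rewrite (partition_big (hF I g0) predT) //=.
  rewrite (eq_bigr (fun G => coef G * \prod_(g in G) ((x g : nat)%:R))); last first.
    by move=> G _; rewrite /coef mulr_suml; apply: eq_bigr => F /andP [_ /eqP ->].
  rewrite (bigD1 set0) //= big_set0 mulr1; congr (_ + _).
  rewrite (bigID (fun G : {set E m} => (#|G| <= d.-1)%N)) /=.
  rewrite [X in _ + X]big1 ?addr0.
    by apply: eq_bigl => G; rewrite card_gt0.
  move=> G /andP [_ hG]; rewrite /coef (coef_zero g0 c k0 d1 W B can IX) ?mul0r //.
  by move: hG; rewrite -ltnNge prednK.
have [d' [Pd [mn le]]] := min_exists Hle.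
exists d'; split; first by split.
by apply: leq_ltn_trans le _; lia.
Qed.
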